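(* Let $A,B,C$ be distinct transfer matrices, i.e. distinct matrices of the form $\begin{bmatrix}t&-1\\1&0\end{bmatrix}$ with $t\in\mathbb{R}$. If $AB$ and $AC$ are hyperbolic, then $AB$ and $AC$ have no common eigenvector. Similarly, if $BA$ and $CA$ are hyperbolic, then $BA$ and $CA$ have no common eigenvector.
   Context: A matrix in $SL(2,\mathbb{R})$ is hyperbolic if the absolute value of its trace is greater than $2$. Two matrices share an eigenvector if some nonzero vector is an eigenvector of both (possibly for different eigenvalues). *)

(* Defs.v *)
From mathcomp Require Import all_boot all_order all_algebra.
From mathcomp Require Import reals.
Set Implicit Arguments. Unset Strict Implicit. Unset Printing Implicit Defensive.
Import Order.TTheory GRing.Theory Num.Theory.
Local Open Scope ring_scope.

Definition transfer {R : realType} (t : R) : 'M[R]_2 :=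
  \matrix_(i < 2, j < 2)
    (if i == 0 then (if j == 0 then t else -1) else (if j == 0 then 1 else 0)).

Definition is_transfer {R : realType} (M : 'M[R]_2) : Prop :=
  exists t : R, M = transfer t.

(* Hyperbolic element of SL(2,R): |trace| > 2 (the transfer matrices and their
   products have determinant 1). *)
Definition hyperbolic {R : realType} (M : 'M[R]_2) : Prop := 2 < `|\tr M|.

Definition eigenvector {R : realType} (M : 'M[R]_2) (v : 'cV[R]_2) : Prop :=
  v != 0 /\ exists lambda : R, M *m v = lambda *: v.

Definition share_eigenvector {R : realType} (M N : 'M[R]_2) : Prop :=
  exists v : 'cV[R]_2, eigenvector M v /\ eigenvector N v.

(* Main.v *)
Require Import Defs.
From mathcomp Require Import all_boot all_order all_algebra.
From mathcomp Require Import reals.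
From mathcomp Require Import ring lra.
Import Order.TTheory GRing.Theory Num.Theory.
Set Implicit Arguments.
Local Open Scope ring_scope.

Lemma big2 (R : realType) (F : 'I_2 -> R) : \sum_(i < 2) F i = F 0 + F 1.
Proof. rewrite big_ord_recl big_ord1; congr (_ + F _); exact: val_inj. Qed.

Lemma mulmx_entry (R : realType) (M : 'M[R]_2) (v : 'cV[R]_2) i :
  (M *m v) i 0 = M i 0 * v 0 0 + M i 1 * v 1 0.
Proof. by rewrite mxE big2. Qed.

Lemma prod_entries (R : realType) (a b : R) :
  let P := transfer a *m transfer b in
  [/\ P 0 0 = a * b - 1, P 0 1 = - a, P 1 0 = b & P 1 1 = -1].
Proof.
by rewrite /= !mxE !big2 !mxE /=; split; ring.
Qed.

Lemma tr_prod (R : realType) (a b : R) : \tr (transfer a *m transfer b) = a * b - 2.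
Proof.
rewrite /mxtrace big2.
have [-> _ _ ->] := prod_entries R a b. ring.
Qed.

Lemma eig_eqs (R : realType) (M : 'M[R]_2) (v : 'cV[R]_2) (l : R) : M *m v = l *: v ->
  M 0 0 * v 0 0 + M 0 1 * v 1 0 = l * v 0 0 /\ M 1 0 * v 0 0 + M 1 1 * v 1 0 = l * v 1 0.
Proof.
move=> H; split.
  by rewrite -mulmx_entry H mxE.
by rewrite -mulmx_entry H mxE.
Qed.

Lemma v_nz (R : realType) (v : 'cV[R]_2) : v != 0 -> v 0 0 != 0 \/ v 1 0 != 0.
Proof.
move=> H; apply/orP; apply: contraNT H; rewrite negb_or !negbK => /andP[/eqP h0 /eqP h1].
apply/eqP/matrixP => i j; rewrite !mxE (ord1 j).
case: i => [[|[|//]] Hi].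
  by rewrite (_ : Ordinal Hi = 0) //; exact: val_inj.
by rewrite (_ : Ordinal Hi = 1) //; exact: val_inj.
Qed.

Lemma alg1 (R : realType) (a b c x y l m : R) : b != c -> (x != 0 \/ y != 0) ->
  (a*b-1)*x + (-a)*y = l*x -> b*x + (-1)*y = l*y ->
  (a*c-1)*x + (-a)*y = m*x -> c*x + (-1)*y = m*y -> a = 0.
Proof.
move=> bc nz e1 e2 e3 e4.
have bc' : b - c != 0 by rewrite subr_eq0.
have [x0|x0] := eqVneq x 0.
  subst x. case: nz; first by rewrite eqxx.
  move=> y0. have /eqP : a * y = 0 by lra.
  by rewrite mulf_eq0 (negbTE y0) orbF => /eqP.
have /eqP : (l - m - a * (b - c)) * x = 0 by lra.
rewrite mulf_eq0 (negbTE x0) orbF subr_eq0 => /eqP hlm.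
have /eqP : (b - c) * (x - a * y) = 0.
  have : (b - c) * x = (l - m) * y by lra.
  rewrite hlm => h. rewrite mulrBr h. ring.
rewrite mulf_eq0 (negbTE bc') /= subr_eq0 => /eqP hx.
subst x.
have y0 : y != 0 by apply: contraNneq x0 => ->; rewrite mulr0.
have /eqP : (l - (a * b - 1)) * y = 0 by lra.
rewrite mulf_eq0 (negbTE y0) orbF subr_eq0 => /eqP hl.
subst l.
have /eqP : a * y = 0 by lra.
by rewrite mulf_eq0 (negbTE y0) orbF => /eqP.
Qed.

Lemma alg2 (R : realType) (a b c x y l m : R) : b != c -> (x != 0 \/ y != 0) ->
  (b*a-1)*x + (-b)*y = l*x -> a*x + (-1)*y = l*y ->
  (c*a-1)*x + (-c)*y = m*x -> a*x + (-1)*y = m*y -> a = 0.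
Proof.
move=> bc nz e1 e2 e3 e4.
have bc' : b - c != 0 by rewrite subr_eq0.
have [y0|y0] := eqVneq y 0.
  subst y. case: nz; last by rewrite eqxx.
  move=> x0. have /eqP : a * x = 0 by lra.
  by rewrite mulf_eq0 (negbTE x0) orbF => /eqP.
have /eqP : (l - m) * y = 0 by lra.
rewrite mulf_eq0 (negbTE y0) orbF subr_eq0 => /eqP hlm. subst m.
have /eqP : (b - c) * (a * x - y) = 0 by lra.
rewrite mulf_eq0 (negbTE bc') /= subr_eq0 => /eqP hy.
subst y.
have x0 : x != 0 by apply: contraNneq y0 => ->; rewrite mulr0.
have /eqP : l * (a * x) = 0 by lra.
rewrite mulf_eq0 (negbTE y0) orbF => /eqP hl. subst l.
have : x = 0 by lra.
by move/eqP; rewrite (negbTE x0).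
Qed.

Lemma not_hyp (R : realType) (a b : R) : a = 0 ->
  ~ hyperbolic (transfer a *m transfer b).
Proof.
move=> -> ; rewrite /hyperbolic tr_prod mul0r sub0r normrN.
by rewrite normr_nat ltxx.
Qed.

Theorem lemma5 (R : realType) (A B C : 'M[R]_2) :
  is_transfer A -> is_transfer B -> is_transfer C ->
  A != B -> A != C -> B != C ->
  (hyperbolic (A *m B) -> hyperbolic (A *m C) ->
     ~ share_eigenvector (A *m B) (A *m C)) /\
  (hyperbolic (B *m A) -> hyperbolic (C *m A) ->
     ~ share_eigenvector (B *m A) (C *m A)).
Proof.
move=> [a ->] [b ->] [c ->] _ _ BC.
have bc : b != c by apply: contraNneq BC => ->.
split.
  move=> hB _ [v [[vnz [l hl]] [_ [m hm]]]].
  have [e1 e2] := eig_eqs hl. have [e3 e4] := eig_eqs hm.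
  have [p1 p2 p3 p4] := prod_entries R a b.
  have [q1 q2 q3 q4] := prod_entries R a c.
  rewrite p1 p2 p3 p4 in e1 e2. rewrite q1 q2 q3 q4 in e3 e4.
  have := @alg1 R a b c _ _ l m bc (@v_nz R v vnz) e1 e2 e3 e4.
  by move/(@not_hyp R a b).
move=> hB _ [v [[vnz [l hl]] [_ [m hm]]]].
have [e1 e2] := eig_eqs hl. have [e3 e4] := eig_eqs hm.
have [p1 p2 p3 p4] := prod_entries R b a.
have [q1 q2 q3 q4] := prod_entries R c a.
rewrite p1 p2 p3 p4 in e1 e2. rewrite q1 q2 q3 q4 in e3 e4.
have a0 := @alg2 R a b c _ _ l m bc (@v_nz R v vnz) e1 e2 e3 e4.
move: hB; rewrite /hyperbolic tr_prod a0 mulr0 sub0r normrN.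
by rewrite normr_nat ltxx.
Qed.
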